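(* Let $\theta>0$, let $L\ge 1$ be an integer, let $K(x,y)=\exp(-\theta|x-y|)$ on $[0,1]$, and let $\mathbf U=\{0\cdot 2^{-L},1\cdot 2^{-L},\dots,2^L\cdot 2^{-L}\}$ be the set of $M=2^L+1$ inducing points (written as a vector in some fixed order). Then there exists an invertible $M\times M$ matrix $\mathbf P_{\mathbf U}$ with $K(\mathbf U,\mathbf U)=\mathbf P_{\mathbf U}\mathbf P_{\mathbf U}^\top$ such that, for all $x\in[0,1]$, the row vector $\phi(x):=K(x,\mathbf U)\mathbf P_{\mathbf U}^{-\top}\in\mathbb R^{1\times M}$ has as its entries exactly the $M$ functions $\psi_{01}(x),\psi_{02}(x)$ and $\psi_{lm}(x)$ for $l=1,\dots,L$, $m\in\{1,3,\dots,2^l-1\}$ (defined in the context). Consequently, for every function $f$ on $[0,1]$, the inducing-point approximation satisfies $K(x,\mathbf U)[K(\mathbf U,\mathbf U)]^{-1}f(\mathbf U)=\phi(x)\mathbf w$ with $\mathbf w:=\mathbf P_{\mathbf U}^{-1}f(\mathbf U)$, and if $f$ is a centered Gaussian process with covariance $K$ then $\mathbf w\sim\mathcal N(\mathbf 0,\mathbf I_M)$. Moreover, for every $l\ge1$ and odd $m$, $\psi_{lm}$ vanishes outside $[(m-1)2^{-l},(m+1)2^{-l}]$.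
   Context: $K(x,\mathbf U)$ denotes the row vector $(K(x,u))_{u\in\mathbf U}$ and $K(\mathbf U,\mathbf U)$ the matrix $(K(u,u'))_{u,u'\in\mathbf U}$; $\mathbf P^{-\top}=(\mathbf P^{-1})^\top$. The functions on $[0,1]$ are $\psi_{01}(x)=\dfrac{e^{-\theta x}+e^{-\theta(1-x)}}{\sqrt{2(1+e^{-\theta})}}$, $\psi_{02}(x)=\dfrac{e^{-\theta x}-e^{-\theta(1-x)}}{\sqrt{2(1-e^{-\theta})}}$, and for $l\ge1$, odd $m\in\{1,3,\dots,2^l-1\}$: $\psi_{lm}(x)=\sqrt{\dfrac{2}{\sinh(2^{1-l}\theta)}}\sinh\big(\theta(x-(m-1)2^{-l})\big)$ if $(m-1)2^{-l}\le x\le m2^{-l}$; $\psi_{lm}(x)=\sqrt{\dfrac{2}{\sinh(2^{1-l}\theta)}}\sinh\big(\theta((m+1)2^{-l}-x)\big)$ if $m2^{-l}\le x\le (m+1)2^{-l}$; and $\psi_{lm}(x)=0$ otherwise. *)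

(* Defs.v *)
From HB Require Import structures.
From mathcomp Require Import all_boot all_order all_algebra.
From mathcomp Require Import all_classical all_reals all_analysis.
Set Implicit Arguments. Unset Strict Implicit. Unset Printing Implicit Defensive.
Import Order.TTheory GRing.Theory Num.Theory.
Import numFieldNormedType.Exports.
Local Open Scope classical_set_scope.
Local Open Scope ring_scope.

Section Defs.
Context {R : realType}.

Definition sinhR (x : R) : R := (expR x - expR (- x)) / 2.

Definition Kexp (theta x y : R) : R := expR (- theta * `|x - y|).

Definition Msz (L : nat) : nat := (2 ^ L).+1.

Definition Upts (L : nat) (i : 'I_(Msz L)) : R := i%:R / 2%:R ^+ L.

Definition KxU (theta : R) (L : nat) (x : R) : 'rV[R]_(Msz L) :=
  \row_j Kexp theta x (Upts j).
Definition KUU (theta : R) (L : nat) : 'M[R]_(Msz L) :=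
  \matrix_(i, j) Kexp theta (Upts i) (Upts j).
Definition fU (L : nat) (f : R -> R) : 'cV[R]_(Msz L) :=
  \col_i f (Upts i).

Definition psi01 (theta x : R) : R :=
  (expR (- theta * x) + expR (- theta * (1 - x))) /
    Num.sqrt (2 * (1 + expR (- theta))).
Definition psi02 (theta x : R) : R :=
  (expR (- theta * x) - expR (- theta * (1 - x))) /
    Num.sqrt (2 * (1 - expR (- theta))).
Definition psilm (theta : R) (l m : nat) (x : R) : R :=
  let c := Num.sqrt (2 / sinhR (2%:R ^- l.-1 * theta)) in
  let a := (m%:R - 1) / 2%:R ^+ l in
  let b := m%:R / 2%:R ^+ l in
  let e := (m%:R + 1) / 2%:R ^+ l in
  if (a <= x) && (x <= b) then c * sinhR (theta * (x - a))
  else if (b <= x) && (x <= e) then c * sinhR (theta * (e - x))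
  else 0.
(* Note: 2^(1-l) = 2^-(l-1) for l >= 1. *)

End Defs.

Inductive psi_label := L01 | L02 | Llm of nat & nat.

Definition valid_label (L : nat) (lb : psi_label) : Prop :=
  match lb with
  | L01 | L02 => True
  | Llm l m => (1 <= l <= L)%N /\ odd m /\ (m < 2 ^ l)%N
  end.

Definition psi {R : realType} (theta : R) (lb : psi_label) : R -> R :=
  match lb with
  | L01 => psi01 theta
  | L02 => psi02 theta
  | Llm l m => psilm theta l m
  end.

Definition gauss_law {R : realType} (m v : R) : set R -> \bar R :=
  if v == 0 then (\d_m : set R -> \bar R)
  else normal_prob m (Num.sqrt v).

Definition centered_gauss_vec {R : realType} (d : measure_display)
  (T : measurableType d) (Pr : probability T R) (n : nat)
  (X : 'I_n -> T -> R) (S : 'M[R]_n) : Prop :=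
  forall (a : 'rV[R]_n) (A : set R), measurable A ->
    Pr [set w | A (\sum_(i < n) a 0 i * X i w)] = gauss_law 0 ((a *m S *m a^T) 0 0) A.

Definition centered_GP {R : realType} (d : measure_display)
  (T : measurableType d) (Pr : probability T R) (F : R -> T -> R)
  (K : R -> R -> R) : Prop :=
  (forall t, measurable_fun setT (F t)) /\
  forall (n : nat) (t : 'I_n -> R), (forall i, 0 <= t i <= 1) ->
    centered_gauss_vec Pr (fun i => F (t i)) (\matrix_(i, j) K (t i) (t j)).

(* Main.v *)
Require Import Defs.
From HB Require Import structures.
From mathcomp Require Import all_boot all_order all_algebra.
From mathcomp Require Import all_classical all_reals all_analysis.
From mathcomp.algebra_tactics Require Import ring lra.
From mathcomp Require Import zify.
Import Order.TTheory GRing.Theory Num.Theory.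
Local Open Scope ring_scope.


Section Hyp.
Context {R : realType}.
Implicit Types (x y t H a b e u : R).

Lemma sinhE x : sinhR x = (expR x - (expR x)^-1) / 2.
Proof. by rewrite /sinhR expRN. Qed.

Lemma expR_neq0 x : expR x != 0.
Proof. by rewrite gt_eqF // expR_gt0. Qed.

Lemma sinhR0 : sinhR (0:R) = 0.
Proof. by rewrite /sinhR oppr0 subrr mul0r. Qed.

Lemma sinhR_gt0 x : 0 < x -> 0 < sinhR x.
Proof.
move=> hx; rewrite /sinhR divr_gt0 // subr_gt0.
by rewrite ltr_expR; lra.
Qed.

Lemma KI_mul H t :
  sinhR (H + H - t) * sinhR H - sinhR (H - t) * sinhR (H + H) = sinhR t * sinhR H.
Proof.
rewrite !sinhE !expRD !expRN.
have := expR_neq0 H; have := expR_neq0 t.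
set E := expR H; set T := expR t => hT hE.
by field; rewrite hE hT.
Qed.

Lemma KI H t : 0 < H ->
  sinhR (H + H - t) / sinhR (H + H) - sinhR (H - t) / sinhR H = sinhR t / sinhR (H + H).
Proof.
move=> hH.
have h1 : sinhR H != 0 by rewrite gt_eqF // sinhR_gt0.
have h2 : sinhR (H + H) != 0 by rewrite gt_eqF // sinhR_gt0 //; lra.
have k := KI_mul H t.
move: k h1 h2; set s1 := sinhR H; set s2 := sinhR (H + H).
set A := sinhR (H + H - t); set B := sinhR (H - t); set C := sinhR t => k h1 h2.
have -> : A / s2 - B / s1 = (A * s1 - B * s2) / (s1 * s2) by field; rewrite h1 h2.
by rewrite k; field; rewrite h1 h2.
Qed.


Variable theta : R.
Hypothesis htheta : 0 < theta.

Definition gc a e x u :=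
  if (a <= x) && (x <= u) && (u <= e) then
    2 * sinhR (theta * (x - a)) * sinhR (theta * (e - u)) / sinhR (theta * (e - a))
  else if (a <= u) && (u <= x) && (x <= e) then
    2 * sinhR (theta * (u - a)) * sinhR (theta * (e - x)) / sinhR (theta * (e - a))
  else 0.

Definition tent a b e x :=
  if (a <= x) && (x <= b) then sinhR (theta * (x - a))
  else if (b <= x) && (x <= e) then sinhR (theta * (e - x)) else 0.

Lemma sinh_th0 y z : y = z -> sinhR (theta * (y - z)) = 0.
Proof. by move=> ->; rewrite subrr mulr0 sinhR0. Qed.

Lemma gcC a e x u : gc a e x u = gc a e u x.
Proof.
rewrite /gc.
case h1: ((a <= x) && (x <= u) && (u <= e)); case h2: ((a <= u) && (u <= x) && (x <= e)) => //.
move: h1 h2 => /andP[/andP[_ h1] _] /andP[/andP[_ h2] _].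
have -> : u = x by apply/eqP; rewrite eq_le h1 h2.
by [].
Qed.

Lemma gc_le a e x u : a <= x -> x <= u -> u <= e ->
  gc a e x u = 2 * sinhR (theta * (x - a)) * sinhR (theta * (e - u)) / sinhR (theta * (e - a)).
Proof. by move=> h1 h2 h3; rewrite /gc h1 h2 h3. Qed.

Lemma gc_edge a e x u : (x <= a) || (e <= x) -> gc a e x u = 0.
Proof.
move=> hx; rewrite /gc; case: ifP => [/andP[/andP[h1 h2] h3]|_].
  case/orP: hx => hx.
    by rewrite (@sinh_th0 x a) ?mulr0 ?mul0r //; apply/eqP; rewrite eq_le hx h1.
  by rewrite (@sinh_th0 e u) ?mulr0 ?mul0r //; apply/eqP; rewrite eq_le h3 (le_trans hx h2).
case: ifP => [/andP[/andP[h1 h2] h3]|//].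
case/orP: hx => hx.
  by rewrite (@sinh_th0 u a) ?mulr0 ?mul0r //; apply/eqP; rewrite eq_le h1 (le_trans h2 hx).
by rewrite (@sinh_th0 e x) ?mulr0 ?mul0r //; apply/eqP; rewrite eq_le h3 hx.
Qed.

Lemma gc_edgeu a e x u : (u <= a) || (e <= u) -> gc a e x u = 0.
Proof. by move=> h; rewrite gcC gc_edge. Qed.

Lemma tent_l a b e x : a <= x -> x <= b -> tent a b e x = sinhR (theta * (x - a)).
Proof. by move=> h1 h2; rewrite /tent h1 h2. Qed.

Lemma tent_r a b e x : b = (a + e) / 2 -> b <= x -> x <= e ->
  tent a b e x = sinhR (theta * (e - x)).
Proof.
move=> hb h1 h2; rewrite /tent h1 h2 /=; case: ifP => [/andP[h3 h4]|//].
have hxb : x = b by apply/eqP; rewrite eq_le h1 h4.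
by congr sinhR; congr (_ * _); rewrite hxb hb; field.
Qed.

Lemma tent_out a b e x : a <= b -> b <= e -> (x < a) || (e < x) -> tent a b e x = 0.
Proof.
move=> hab hbe hx; rewrite /tent; case: ifP => [/andP[h3 h4]|_].
  by exfalso; case/orP: hx; lra.
case: ifP => [/andP[h3 h4]|//].
by exfalso; case/orP: hx; lra.
Qed.

Lemma LL a b e x u : a < e -> b = (a + e) / 2 ->
  gc a e x u - gc a b x u - gc b e x u =
  2 / sinhR (theta * (e - a)) * tent a b e x * tent a b e u.
Proof.
move=> hae hb.
have hab : a <= b by rewrite hb; lra.
have hbe : b <= e by rewrite hb; lra.
wlog hxu : x u / x <= u.
  move=> W; case: (lerP x u) => h; first exact: W.
  by rewrite gcC [gc a b _ _]gcC [gc b e _ _]gcC W ?ltW // mulrAC.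
case: (ltrP x a) => hxa.
  rewrite (@gc_edge a e x u) ?(ltW hxa) // (@gc_edge a b x u) ?(ltW hxa) //.
  rewrite (@gc_edge b e x u) ?(le_trans (ltW hxa) hab) //.
  rewrite (@tent_out a b e x) ?hxa // mulr0 mul0r !subr0 //.
case: (ltrP e u) => heu.
  rewrite (@gc_edgeu a e x u) ?(ltW heu) ?orbT // (@gc_edgeu a b x u) ?(le_trans hbe (ltW heu)) ?orbT //.
  rewrite (@gc_edgeu b e x u) ?(ltW heu) ?orbT //.
  by rewrite (@tent_out a b e u) ?heu ?orbT // !mulr0 !subr0.
have hH : 0 < theta * (b - a) by rewrite mulr_gt0 // hb; lra.
case: (lerP u b) => hub.
  rewrite (@gc_edge b e x u); last by rewrite (le_trans hxu hub).
  rewrite !gc_le // ?(le_trans hub hbe) ?(le_trans hxa hxu) // !tent_l // ?(le_trans hxu hub) ?(le_trans hxa hxu) // subr0.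
  have k := @KI (theta * (b - a)) (theta * (u - a)) hH.
  have e1 : theta * (e - u) = theta * (b - a) + theta * (b - a) - theta * (u - a)
    by rewrite hb; field.
  have e2 : theta * (b - u) = theta * (b - a) - theta * (u - a) by ring.
  have e3 : theta * (e - a) = theta * (b - a) + theta * (b - a) by rewrite hb; field.
  rewrite e1 e2 e3.
  move: k; set A := sinhR _; set B := sinhR _; set C := sinhR _; set S2 := sinhR _.
  set S1 := sinhR _; set X := sinhR _ => k.
  transitivity (2 * X * (A / B - C / S2)); first by ring.
  by rewrite k; ring.
case: (lerP x b) => hxb.
  rewrite (@gc_edgeu a b x u); last by rewrite (ltW hub) orbT.
  rewrite (@gc_edge b e x u); last by rewrite hxb.
  rewrite (@gc_le a e x u) // (@tent_l a b e x) // (@tent_r a b e u hb) ?(ltW hub) // !subr0.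
  by ring.
rewrite (@gc_edge a b x u); last by rewrite (ltW hxb) orbT.
rewrite (@gc_le a e x u) ?(le_trans hab (ltW hxb)) // (@gc_le b e x u) ?(ltW hxb) // subr0.
rewrite (@tent_r a b e x hb) ?(ltW hxb) ?(le_trans hxu heu) //.
rewrite (@tent_r a b e u hb) ?(le_trans (ltW hxb) hxu) //.
have k := @KI (theta * (b - a)) (theta * (e - x)) hH.
have e1 : theta * (x - a) = theta * (b - a) + theta * (b - a) - theta * (e - x)
  by rewrite hb; field.
have e2 : theta * (x - b) = theta * (b - a) - theta * (e - x) by rewrite hb; field.
have e3 : theta * (e - a) = theta * (b - a) + theta * (b - a) by rewrite hb; field.
have e4 : theta * (e - b) = theta * (b - a) by rewrite hb; field.
rewrite e1 e2 e3 e4.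
move: k.
set A := sinhR (theta * (b - a) + theta * (b - a) - theta * (e - x)).
set B := sinhR (theta * (b - a) + theta * (b - a)).
set C := sinhR (theta * (b - a) - theta * (e - x)).
set S2 := sinhR (theta * (b - a)).
set X := sinhR (theta * (e - u)) => k.
transitivity (2 * X * (A / B - C / S2)); first by ring.
by rewrite k; ring.
Qed.


Lemma expR_sub y z : expR (y - z) = expR y / expR z.
Proof. by rewrite expRD expRN. Qed.

Lemma base_id x u : 0 <= x -> x <= 1 -> 0 <= u -> u <= 1 ->
  Kexp theta x u - psi01 theta x * psi01 theta u - psi02 theta x * psi02 theta u
  = gc 0 1 x u.
Proof.
have hE1 : expR (- theta) < 1 by rewrite expR_lt1 oppr_lt0.
have hE0 := expR_gt0 (- theta).
have hd1 : 0 <= 2 * (1 + expR (- theta)) by lra.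
have hd2 : 0 <= 2 * (1 - expR (- theta)) by lra.
have p1 : forall y z, psi01 theta y * psi01 theta z =
  (expR (- theta * y) + expR (- theta * (1 - y))) * (expR (- theta * z) + expR (- theta * (1 - z)))
    / (2 * (1 + expR (- theta))).
  by move=> y z; rewrite /psi01 mulf_div -expr2 sqr_sqrtr.
have p2 : forall y z, psi02 theta y * psi02 theta z =
  (expR (- theta * y) - expR (- theta * (1 - y))) * (expR (- theta * z) - expR (- theta * (1 - z)))
    / (2 * (1 - expR (- theta))).
  by move=> y z; rewrite /psi02 mulf_div -expr2 sqr_sqrtr.
wlog hxu : x u / x <= u.
  move=> W h1 h2 h3 h4; case: (lerP x u) => h; first exact: W.
  by rewrite gcC -(W u x (ltW h) h3 h4 h1 h2) /Kexp -normrN opprB !p1 !p2; ring.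
move=> h1 h2 h3 h4.
rewrite p1 p2 gc_le // /Kexp ler0_norm ?subr_le0 //.
rewrite !subr0 opprB.
have -> : - theta * (u - x) = theta * x - theta * u by ring.
have -> : - theta * (1 - x) = theta * x - theta by ring.
have -> : - theta * (1 - u) = theta * u - theta by ring.
have -> : theta * (1 - u) = theta - theta * u by ring.
rewrite !mulNr !expRN !sinhE !expR_sub mulr1.
have := expR_neq0 (theta * x); have := expR_neq0 (theta * u); have := expR_neq0 theta.
have : expR theta - 1 != 0 by rewrite subr_eq0 gt_eqF // -expR0 ltr_expR.
have : expR theta + 1 != 0 by rewrite gt_eqF // ltr_wpDl // ltW // expR_gt0.
set X := expR (theta * x); set U := expR (theta * u); set E := expR theta => hm hp hE hU hX.
have hEE : E * E - 1 != 0.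
  by rewrite (_ : E * E - 1 = (E - 1) * (E + 1)) ?mulf_neq0 //; ring.
by field; rewrite hE hEE hU hX hp hm.
Qed.


Definition Gsum (l : nat) x u :=
  \sum_(0 <= k < 2 ^ l) gc (k%:R / 2%:R ^+ l) (k.+1%:R / 2%:R ^+ l) x u.

Definition pp (l k : nat) x u :=
  psilm theta l.+1 k.*2.+1 x * psilm theta l.+1 k.*2.+1 u.

Definition Ssum (l : nat) x u := \sum_(0 <= l' < l) \sum_(0 <= k < 2 ^ l') pp l' k x u.

Lemma sum_double (F : nat -> R) n :
  \sum_(0 <= k < n.*2) F k = \sum_(0 <= k < n) (F k.*2 + F k.*2.+1).
Proof.
elim: n => [|n IH]; first by rewrite !big_geq.
by rewrite doubleS !big_nat_recr //= IH addrA.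
Qed.

Lemma psilm_tent l m x :
  psilm theta l m x = Num.sqrt (2 / sinhR (2%:R ^- l.-1 * theta)) *
    tent ((m%:R - 1) / 2%:R ^+ l) (m%:R / 2%:R ^+ l) ((m%:R + 1) / 2%:R ^+ l) x.
Proof. by rewrite /psilm /tent; case: ifP => _; [|case: ifP => _]; rewrite ?mulr0. Qed.

Lemma two_pow_gt0 (l : nat) : 0 < (2%:R : R) ^+ l.
Proof. by rewrite exprn_gt0. Qed.

Lemma step_term l k x u :
  gc (k%:R / 2%:R ^+ l) (k.+1%:R / 2%:R ^+ l) x u
  - gc (k.*2%:R / 2%:R ^+ l.+1) (k.*2.+1%:R / 2%:R ^+ l.+1) x u
  - gc (k.*2.+1%:R / 2%:R ^+ l.+1) (k.*2.+2%:R / 2%:R ^+ l.+1) x u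
  = pp l k x u.
Proof.
have h2 := two_pow_gt0 l.
have h2' : (2%:R : R) ^+ l != 0 by rewrite gt_eqF.
have n1 : (k.*2%:R : R) = 2 * k%:R by rewrite -mul2n natrM.
have n2 : (k.*2.+1%:R : R) = 2 * k%:R + 1 by rewrite -addn1 -mul2n natrD natrM.
have n3 : (k.*2.+2%:R : R) = 2 * k%:R + 2 by rewrite -addn2 -mul2n natrD natrM.
have n4 : (k.+1%:R : R) = k%:R + 1 by rewrite -addn1 natrD.
have ea : (k.*2%:R : R) / 2%:R ^+ l.+1 = k%:R / 2%:R ^+ l by rewrite n1 exprS; field.
have ee : (k.*2.+2%:R : R) / 2%:R ^+ l.+1 = k.+1%:R / 2%:R ^+ l by rewrite n3 n4 exprS; field.
rewrite ea ee LL; first last.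
- by rewrite n2 n4 exprS; field.
- by rewrite ltr_pM2r ?invr_gt0 // ltr_nat.
rewrite /pp !psilm_tent /=.
have ea' : ((k.*2.+1)%:R - 1 : R) / 2%:R ^+ l.+1 = k%:R / 2%:R ^+ l by rewrite n2 exprS; field.
have ee' : ((k.*2.+1)%:R + 1 : R) / 2%:R ^+ l.+1 = k.+1%:R / 2%:R ^+ l by rewrite n2 n4 exprS; field.
rewrite ea' ee'.
have hs : theta * (k.+1%:R / 2%:R ^+ l - k%:R / 2%:R ^+ l) = 2%:R ^- l * theta.
  by rewrite n4; field.
rewrite hs.
have hpos : 0 <= 2 / sinhR (2%:R ^- l * theta).
  by rewrite divr_ge0 // ltW // sinhR_gt0 // mulr_gt0 // invr_gt0.
set T1 := tent _ _ _ x; set T2 := tent _ _ _ u.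
rewrite mulrACA -expr2 sqr_sqrtr //; ring.
Qed.

Lemma main_ind l x u : 0 <= x -> x <= 1 -> 0 <= u -> u <= 1 ->
  Kexp theta x u - psi01 theta x * psi01 theta u - psi02 theta x * psi02 theta u
  - Ssum l x u = Gsum l x u.
Proof.
move=> h1 h2 h3 h4; elim: l => [|l IH].
  rewrite /Ssum /Gsum big_geq // subr0 big_nat1 expr0 !divr1 base_id //.
rewrite /Ssum big_nat_recr //= -/(Ssum l x u) opprD addrA IH.
rewrite /Gsum expnS mul2n sum_double -sumrB; apply: eq_bigr => k _.
rewrite -(step_term l k x u); ring.
Qed.

End Hyp.





Definition labn (L n : nat) : psi_label :=
  if n == 0%N then L01 else if n == (2 ^ L)%N then L02
  else Llm (trunc_log 2 n).+1 (n - 2 ^ (trunc_log 2 n))%N.*2.+1.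

Lemma labn_level L l k : (l < L)%N -> (k < 2 ^ l)%N -> labn L (2 ^ l + k) = Llm l.+1 k.*2.+1.
Proof.
move=> hl hk.
have h1 : (0 < 2 ^ l)%N by rewrite expn_gt0.
have h2 : (2 ^ l.+1 <= 2 ^ L)%N by rewrite leq_pexp2l.
have h3 : (2 ^ l.+1 = 2 * 2 ^ l)%N by rewrite expnS.
rewrite /labn ifF; last by apply/eqP; lia.
rewrite ifF; last by apply/eqP; lia.
have -> : trunc_log 2 (2 ^ l + k) = l by apply: trunc_log_eq => //; apply/andP; split; lia.
by rewrite addKn.
Qed.

Lemma labn_valid L n : (n <= 2 ^ L)%N -> valid_label L (labn L n).
Proof.
move=> hn; rewrite /labn; case: eqP => // h0; case: eqP => // h1.
set t := trunc_log 2 n.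
have [b1 b2] : (2 ^ t <= n)%N /\ (n < 2 ^ t.+1)%N.
  by have /andP[] := @trunc_log_bounds 2 n isT (ltac:(lia)).
have ht : (t < L)%N.
  rewrite ltnNge; apply/negP => hLt.
  have : (2 ^ L <= 2 ^ t)%N by rewrite leq_pexp2l.
  lia.
have h3 : (2 ^ t.+1 = 2 * 2 ^ t)%N by rewrite expnS.
split; first by lia.
split; first by rewrite /= odd_double.
lia.
Qed.

Lemma labn_inj L a b : (a <= 2 ^ L)%N -> (b <= 2 ^ L)%N -> labn L a = labn L b -> a = b.
Proof.
move=> ha hb; rewrite /labn.
case: (a =P 0%N) => ha0; case: (b =P 0%N) => hb0; try by rewrite ?ha0 ?hb0.
- by case: (b =P (2 ^ L)%N).
- by case: (a =P (2 ^ L)%N).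
case: (a =P (2 ^ L)%N) => ha1; case: (b =P (2 ^ L)%N) => hb1; try by rewrite ?ha1 ?hb1.
case => ht.
have pa : (2 ^ trunc_log 2 a <= a)%N by apply: trunc_logP; lia.
have pb : (2 ^ trunc_log 2 b <= b)%N by apply: trunc_logP; lia.
rewrite ht in pa *.
rewrite -!muln2 => h; lia.
Qed.

Lemma labn_surj L lb : valid_label L lb -> exists2 n, (n <= 2 ^ L)%N & labn L n = lb.
Proof.
case: lb => [||l m] /=.
- by exists 0%N.
- by exists (2 ^ L)%N; rewrite // /labn expn_eq0 eqxx.
case=> /andP[hl1 hlL] [hm hml].
have hod := odd_double_half m; rewrite hm -muln2 /= in hod.
set h := m./2 in hod *.
have [l' hl'] : exists l', l = l'.+1 by exists l.-1; lia.
subst l.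
have e2 : (2 ^ l'.+1 = 2 * 2 ^ l')%N by rewrite expnS.
have hk : (h < 2 ^ l')%N by lia.
exists (2 ^ l' + h)%N.
  have : (2 ^ l'.+1 <= 2 ^ L)%N by rewrite leq_pexp2l.
  lia.
rewrite labn_level //.
congr Llm; rewrite -muln2; lia.
Qed.

Lemma sum_lab {R : realType} L (G : nat -> R) :
  \sum_(j < Msz L) G j = G 0%N + \sum_(1 <= n < 2 ^ L) G n + G (2 ^ L)%N.
Proof. by rewrite -(big_mkord xpredT G) /Msz big_nat_recr //= big_ltn // expn_gt0. Qed.

Lemma sum_levels {R : realType} L (G : nat -> R) :
  \sum_(1 <= n < 2 ^ L) G n = \sum_(0 <= l < L) \sum_(0 <= k < 2 ^ l) G (2 ^ l + k)%N.
Proof.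
elim: L => [|L IH]; first by rewrite !big_geq.
have h1 : (0 < 2 ^ L)%N by rewrite expn_gt0.
have h2 : (2 ^ L.+1 = 2 * 2 ^ L)%N by rewrite expnS.
rewrite big_nat_recr //= -IH (@big_cat_nat _ _ _ (2 ^ L)) //=; last by lia.
congr (_ + _).
rewrite -{1}[(2 ^ L)%N]add0n big_addn.
have -> : (2 ^ L.+1 - 2 ^ L = 2 ^ L)%N by lia.
by apply: eq_bigr => k _; rewrite addnC.
Qed.

Section Nodes.
Context {R : realType}.
Variable theta : R.
Hypothesis htheta : 0 < theta.

Lemma Gsum_node L i x : Gsum theta L x (i%:R / 2%:R ^+ L) = 0.
Proof.
rewrite /Gsum big1 // => k _.
have hp : 0 < ((2%:R : R) ^+ L)^-1 by rewrite invr_gt0 exprn_gt0.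
apply: gc_edgeu.
case: (leqP i k) => h.
  by rewrite !ler_pM2r // !ler_nat h.
by rewrite !ler_pM2r // !ler_nat h orbT.
Qed.

Lemma node_in01 L i : (i <= 2 ^ L)%N -> 0 <= (i%:R : R) / 2%:R ^+ L <= 1.
Proof.
move=> hi; have hp : 0 < (2%:R : R) ^+ L by rewrite exprn_gt0.
by rewrite divr_ge0 ?ler0n ?(ltW hp) //= ler_pdivrMr // mul1r -natrX ler_nat hi.
Qed.

Lemma sum_psi L x u :
  \sum_(j < Msz L) psi theta (labn L j) x * psi theta (labn L j) u =
  psi01 theta x * psi01 theta u + psi02 theta x * psi02 theta u + Ssum theta L x u.
Proof.
rewrite (sum_lab L (fun n => psi theta (labn L n) x * psi theta (labn L n) u)).
rewrite (sum_levels L (fun n => psi theta (labn L n) x * psi theta (labn L n) u)).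
have h0 : labn L 0 = L01 by [].
have hL : labn L (2 ^ L) = L02 by rewrite /labn expn_eq0 eqxx.
rewrite h0 hL /= /Ssum addrAC; congr (_ + _ + _).
apply: eq_big_nat => l /andP[_ hl]; apply: eq_big_nat => k /andP[_ hk].
by rewrite labn_level.
Qed.

Lemma node_expansion L i x : 0 <= x -> x <= 1 -> (i <= 2 ^ L)%N ->
  Kexp theta x (i%:R / 2%:R ^+ L) =
  \sum_(j < Msz L) psi theta (labn L j) x * psi theta (labn L j) (i%:R / 2%:R ^+ L).
Proof.
move=> h1 h2 hi; have /andP[h3 h4] := @node_in01 L i hi.
rewrite sum_psi.
have := main_ind theta htheta L x _ h1 h2 h3 h4; rewrite Gsum_node => /eqP; rewrite subr_eq0 => /eqP h.
by rewrite -h; ring.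
Qed.
End Nodes.


Lemma sum_delta {R : realType} (F : nat -> R) (n m : nat) :
  \sum_(j < n) F j * (j == m :> nat)%:R = if (m < n)%N then F m else 0.
Proof.
rewrite -(big_mkord xpredT (fun j => F j * (j == m)%:R)).
elim: n => [|n IH]; first by rewrite big_geq // ltn0.
rewrite big_nat_recr //= IH ltnS.
case: (ltngtP m n) => h.
- by rewrite ?(ltnW h) ?(gtn_eqF h) mulr0 addr0.
- by rewrite mulr0 addr0.
- by rewrite h mulr1 add0r.
Qed.

Section KMS.
Context {R : realType}.
Variable theta : R.
Hypothesis htheta : 0 < theta.
Variable L : nat.

Let N : R := 2%:R ^+ L.
Let rho : R := expR (- (theta / N)).

Lemma N_gt0 : 0 < N. Proof. by rewrite exprn_gt0. Qed.

Lemma K_pow (i j : nat) :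
  Kexp theta (i%:R / N) (j%:R / N) = rho ^+ (i - j + (j - i))%N.
Proof.
have hN := N_gt0.
rewrite /Kexp /rho -expRM_natl.
case: (leqP i j) => h.
  have -> : (i - j = 0)%N by apply/eqP; rewrite subn_eq0.
  have -> : i%:R / N - j%:R / N = - ((j - i)%N%:R / N) by rewrite natrB //; field; rewrite gt_eqF.
  have hp : 0 <= (j - i)%N%:R / N by rewrite divr_ge0 // ltW.
  rewrite normrN ger0_norm // add0n; congr expR.
  by rewrite mulrN mulNr mulrCA.
have -> : (j - i = 0)%N by apply/eqP; rewrite subn_eq0 ltnW.
have -> : i%:R / N - j%:R / N = ((i - j)%N%:R / N) by rewrite natrB ?(ltnW h) //; field; rewrite gt_eqF.
have hp : 0 <= (i - j)%N%:R / N by rewrite divr_ge0 // ltW.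
rewrite ger0_norm // addn0; congr expR.
by rewrite mulrN mulNr mulrCA.
Qed.

Lemma rho_gt0 : 0 < rho. Proof. exact: expR_gt0. Qed.
Lemma rho_lt1 : rho < 1.
Proof. by rewrite /rho expR_lt1 oppr_lt0 divr_gt0 // N_gt0. Qed.

Definition dd (k : nat) : R := if (k == 0%N) || (k == 2 ^ L)%N then 1 else 1 + rho ^+ 2.

Definition Bmx : 'M[R]_(Msz L) := \matrix_(j, k)
  (((j == k :> nat)%:R * dd k - rho * ((0 < k)%N%:R * (j == k.-1 :> nat)%:R + (j == k.+1 :> nat)%:R))
   / (1 - rho ^+ 2)).

Lemma KUU_B : KUU theta L *m Bmx = 1%:M.
Proof.
have hr0 := rho_gt0; have hr1 := rho_lt1.
have hd : 1 - rho ^+ 2 != 0 by rewrite gt_eqF // subr_gt0 expr2; nra.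
apply/matrixP => i k; rewrite !mxE.
set f := fun j : nat => rho ^+ (i - j + (j - i))%N.
have -> : \sum_j KUU theta L i j * Bmx j k =
  \sum_(j < Msz L) (dd k / (1 - rho ^+ 2) * (f j * (j == k :> nat)%:R)
     + (- rho * (0 < k)%N%:R / (1 - rho ^+ 2)) * (f j * (j == k.-1 :> nat)%:R)
     + (- rho / (1 - rho ^+ 2)) * (f j * (j == k.+1 :> nat)%:R)).
  apply: eq_bigr => j _; rewrite !mxE /Upts K_pow /f; ring.
rewrite !big_split /= -!mulr_sumr !sum_delta.
have hk := ltn_ord k; have hi := ltn_ord i.
rewrite hk ifT; last by move: hk; rewrite /Msz; lia.
move: hk hi; rewrite /Msz /f /dd => hk hi.
rewrite (_ : (i == k) = (i == k :> nat)) //.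
move: hk hi; move: (nat_of_ord i) (nat_of_ord k) => {f} i0 k0 hk hi; clear i k; rename i0 into i; rename k0 into k.
case: (ltngtP i k) => h.
- have -> : (i - k + (k - i) = (k - i - 1).+1)%N by lia.
  have -> : (i - k.-1 + (k.-1 - i) = (k - i - 1))%N by lia.
  have -> : (i - k.+1 + (k.+1 - i) = (k - i - 1).+2)%N by lia.
  have -> : (0 < k)%N by lia.
  have -> : ((k : nat) == 0%N) = false by apply/eqP; lia.
  case: ((k : nat) =P (2 ^ L)%N) => hkL /=.
    rewrite ifF; last by rewrite hkL ltnn.
    by rewrite !exprS; set q := rho ^+ (k - i - 1); rewrite ?[true%:R]/= ?mulr1n; field.
  rewrite ifT; last by lia.
  by rewrite !exprS; set q := rho ^+ (k - i - 1); rewrite ?[true%:R]/= ?mulr1n; field.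
- have -> : (i - k + (k - i) = (i - k - 1).+1)%N by lia.
  have -> : (i - k.+1 + (k.+1 - i) = (i - k - 1))%N by lia.
  have -> : ((k : nat) == (2 ^ L)%N) = false by apply/eqP; lia.
  have -> : (k.+1 < (2 ^ L).+1)%N by lia.
  case: ((k : nat) =P 0%N) => hk0 /=.
    by rewrite hk0 /= !exprS; set q := rho ^+ (i - k - 1); rewrite ?[true%:R]/= ?mulr1n; field.
  have -> : (0 < k)%N by lia.
  have -> : (i - k.-1 + (k.-1 - i) = (i - k - 1).+2)%N by lia.
  by rewrite !exprS ?mulr1n; set q := rho ^+ (i - k - 1); rewrite ?[true%:R]/= ?mulr1n; field.
- rewrite h ?eqxx subnn /= expr0.
  have -> : (k - k.+1 + (k.+1 - k) = 1)%N by lia.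
  case: ((k : nat) =P 0%N) => hk0 /=.
    rewrite hk0 /= ifT; last by have := expn_gt0 2 L; lia.
    by field.
  have -> : (0 < k)%N by lia.
  have -> : (k - k.-1 + (k.-1 - k) = 1)%N by lia.
  case: ((k : nat) =P (2 ^ L)%N) => hkL /=.
    rewrite ifF; last by rewrite hkL ltnn.
    by field.
  rewrite ifT; last by lia.
  by field.
Qed.

Lemma KUU_unit : KUU theta L \in unitmx.
Proof. by case: (mulmx1_unit KUU_B). Qed.

End KMS.

Local Open Scope classical_set_scope.
Local Open Scope ring_scope.

Theorem theorem1 (R : realType) (theta : R) (L : nat) :
  0 < theta -> (1 <= L)%N ->
  exists P : 'M[R]_(Msz L),
    [/\ P \in unitmx,
        KUU theta L = P *m P^T,
        (exists lab : 'I_(Msz L) -> psi_label,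
           [/\ injective lab,
               (forall j, valid_label L (lab j)),
               (forall lb, valid_label L lb -> exists j, lab j = lb) &
               forall x : R, 0 <= x <= 1 -> forall j,
                 (KxU theta L x *m (invmx P)^T) 0 j = psi theta (lab j) x]),
        (forall (f : R -> R) (x : R), 0 <= x <= 1 ->
           KxU theta L x *m invmx (KUU theta L) *m fU L f
           = (KxU theta L x *m (invmx P)^T) *m (invmx P *m fU L f)) &
        ((forall (d : measure_display) (T : measurableType d)
                (Pr : probability T R) (F : R -> T -> R),
           centered_GP Pr F (Kexp theta) ->
           centered_gauss_vec Pr
             (fun j w => \sum_i invmx P j i * F (Upts i) w) 1%:M) /\
        forall (l m : nat), (1 <= l)%N -> odd m ->
          forall x : R, 0 <= x <= 1 ->
            ~ ((m%:R - 1) / 2%:R ^+ l <= x <= (m%:R + 1) / 2%:R ^+ l) ->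
            psilm theta l m x = 0)].
Proof.
move=> hth hL.
pose lab := fun j : 'I_(Msz L) => labn L j.
pose P : 'M[R]_(Msz L) := \matrix_(i, j) psi theta (lab j) (Upts i).
pose Psi x : 'rV[R]_(Msz L) := \row_j psi theta (lab j) x.
have hord : forall k : 'I_(Msz L), (k <= 2 ^ L)%N by move=> k; rewrite -ltnS; exact: ltn_ord.
have hin : forall k : 'I_(Msz L), 0 <= (Upts k : R) <= 1 by move=> k; exact: (@node_in01 R L k (hord k)).
have hKx : forall x, 0 <= x <= 1 -> KxU theta L x = Psi x *m P^T.
  move=> x /andP[h1 h2]; apply/rowP => k; rewrite !mxE /Upts.
  rewrite (node_expansion theta hth L k x h1 h2 (hord k)).
  by apply: eq_bigr => j _; rewrite !mxE.
have hKUU : KUU theta L = P *m P^T.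
  apply/matrixP => i k; rewrite !mxE.
  have /andP[h1 h2] := hin i.
  rewrite /Upts (node_expansion theta hth L k _ h1 h2 (hord k)).
  by apply: eq_bigr => j _; rewrite !mxE.
have hKu := KUU_unit theta hth L.
have hPu : P \in unitmx by move: hKu; rewrite hKUU unitmx_mul => /andP[].
exists P; split => //.
- exists lab; split.
  + move=> a b /labn_inj h; apply: val_inj; exact: h.
  + by move=> j; apply: labn_valid.
  + move=> lb /labn_surj [n hn <-].
    by exists (Ordinal (n:=Msz L) (m:=n) (ltnSE hn)).
  + move=> x hx j.
    by rewrite hKx // -mulmxA -trmx_mul mulVmx // trmx1 mulmx1 mxE.
- move=> f x _.
  set X := (invmx P)^T *m invmx P.
  have hX : KUU theta L *m X = 1%:M.
    by rewrite hKUU /X mulmxA -(mulmxA P) -trmx_mul mulVmx // trmx1 mulmx1 mulmxV.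
  have e := mulKmx hKu X; rewrite hX mulmx1 in e.
  by rewrite e /X !mulmxA.
split.
- move=> d T Pr F [hmeas hGP] a A hA.
  pose b := a *m invmx P.
  have hsum : forall w, \sum_(j < Msz L) a 0 j * (\sum_i invmx P j i * F (Upts i) w)
      = \sum_(i < Msz L) b 0 i * F (Upts i) w.
    move=> w; under eq_bigr do rewrite mulr_sumr.
    rewrite exchange_big; apply: eq_bigr => i _; rewrite mxE mulr_suml.
    by apply: eq_bigr => j _; rewrite mulrA.
  have E : [set w | A (\sum_(j < Msz L) a 0 j * (\sum_i invmx P j i * F (Upts i) w))]
         = [set w | A (\sum_(i < Msz L) b 0 i * F (Upts i) w)].
    by apply/funext => w /=; exact: (congr1 A (hsum w)).
  rewrite E (hGP (Msz L) (@Upts R L) hin b A hA).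
  congr (gauss_law 0 _ A).
  rewrite -/(KUU theta L) hKUU /b trmx_mul.
  rewrite !mulmxA -(mulmxA _ (invmx P) P) mulVmx // mulmx1.
  by rewrite -(mulmxA _ P^T) -trmx_mul mulVmx // trmx1 mulmx1.
- move=> l m hl hm x hx hnot; rewrite /psilm.
  have hN : 0 < ((2%:R : R) ^+ l)^-1 by rewrite invr_gt0 exprn_gt0.
  case: ifP => [/andP[h1 h2]|_].
    exfalso; apply: hnot; rewrite h1 /=; apply: (le_trans h2).
    by rewrite ler_pM2r //; lra.
  case: ifP => [/andP[h1 h2]|//].
  exfalso; apply: hnot; rewrite h2 andbT; apply: le_trans h1.
  by rewrite ler_pM2r //; lra.
Qed.
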